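(* Let $N_e, N_r \ge 1$ be integers. For every binary tensor $\mathcal{X} = (x_{ijk}) \in \{0,1\}^{N_e \times N_e \times N_r}$ there exist a positive integer $D$, a real number $\Delta > 0$, and matrices $A \in \{+\Delta,-\Delta\}^{N_e \times D}$, $B \in \{+\Delta,-\Delta\}^{N_e \times D}$, $C \in \{+\Delta,-\Delta\}^{N_r \times D}$ such that $$\mathcal{X} = \sum_{d=1}^{D} \mathbf{a}_d \otimes \mathbf{b}_d \otimes \mathbf{c}_d,$$ i.e. $x_{ijk} = \sum_{d=1}^D A_{id} B_{jd} C_{kd}$ for all $i,j \in [N_e]$, $k \in [N_r]$.
   Context: $[n]=\{1,\dots,n\}$. $\mathbf{a}_d,\mathbf{b}_d,\mathbf{c}_d$ denote the $d$-th columns of $A,B,C$, and $\mathbf{u}\otimes\mathbf{v}\otimes\mathbf{w}$ is the 3-way outer product with entries $(\mathbf{u}\otimes\mathbf{v}\otimes\mathbf{w})_{ijk}=u_iv_jw_k$. *)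

(* Defs.v *)
(* Reals are rendered as an arbitrary realFieldType R (the
   statement is purely algebraic/order-theoretic, so this is a generalisation
   that specialises to the reals). *)
From HB Require Import structures.
From mathcomp Require Import all_boot all_order all_algebra.
Set Implicit Arguments. Unset Strict Implicit. Unset Printing Implicit Defensive.
Import Order.TTheory GRing.Theory Num.Theory.
Local Open Scope ring_scope.

Definition binary_tensor (Ne Nr : nat) := 'I_Ne -> 'I_Ne -> 'I_Nr -> bool.

Definition pm_matrix (R : ringType) (m n : nat) (Delta : R) (M : 'M[R]_(m, n)) :=
  forall i j, M i j = Delta \/ M i j = - Delta.

(* Main.v *)
Require Import Defs.
From HB Require Import structures.
From mathcomp Require Import all_boot all_order all_algebra.
Import Order.TTheory GRing.Theory Num.Theory.
Local Open Scope ring_scope.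

Section Aux.
Variable R : realFieldType.
Definition pmf (s b : bool) : R := if s || b then 2^-1 else - 2^-1.

Lemma sum_pmf b : \sum_(s : bool) pmf s b = b%:R.
Proof.
rewrite big_bool /pmf /=; case: b => /=.
  by rewrite -mulr2n -(mulr_natr (2^-1)) mulVf // pnatr_eq0.
by rewrite subrr.
Qed.
End Aux.
Definition Tt (Ne Nr : nat) : finType := ('I_Ne * 'I_Ne * 'I_Nr * (bool * bool * bool))%type.


Theorem theorem1 (R : realFieldType) (Ne Nr : nat) (hNe : (1 <= Ne)%N)
  (hNr : (1 <= Nr)%N) (X : binary_tensor Ne Nr) :
  exists (D : nat) (Delta : R) (A : 'M[R]_(Ne, D)) (B : 'M[R]_(Ne, D))
         (C : 'M[R]_(Nr, D)),
    [/\ (0 < D)%N, 0 < Delta, pm_matrix Delta A,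
        pm_matrix Delta B /\ pm_matrix Delta C &
        forall (i j : 'I_Ne) (k : 'I_Nr),
          (X i j k)%:R = \sum_(d < D) A i d * B j d * C k d].
Proof.
pose T := Tt Ne Nr.
pose ev (d : 'I_#|T|) : T := enum_val d.
exists #|T|, (2^-1 : R).
exists (\matrix_(i, d) pmf R (ev d).2.1.1 (i == (ev d).1.1.1)).
exists (\matrix_(j, d) pmf R (ev d).2.1.2 (j == (ev d).1.1.2)).
exists (\matrix_(k, d) pmf R (ev d).2.2
          (X (ev d).1.1.1 (ev d).1.1.2 (ev d).1.2 && (k == (ev d).1.2))).
have pmP s b : pmf R s b = 2^-1 \/ pmf R s b = - 2^-1.
  by rewrite /pmf; case: (s || b); [left|right].
split.
- apply/card_gt0P.
  have i0 : 'I_Ne by exists 0%N.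
  have k0 : 'I_Nr by exists 0%N.
  by exists ((i0, i0, k0), (true, true, true)).
- by rewrite invr_gt0 ltr0n.
- by move=> i d; rewrite mxE.
- by split=> i d; rewrite mxE.
move=> i j k.
under eq_bigr => d _ do rewrite !mxE.
rewrite -(big_enum_val (A := predT)
  (fun p : T => pmf R p.2.1.1 (i == p.1.1.1) * pmf R p.2.1.2 (j == p.1.1.2) *
     pmf R p.2.2 (X p.1.1.1 p.1.1.2 p.1.2 && (k == p.1.2)))) /=.
rewrite -(pair_big predT predT (fun (a : 'I_Ne * 'I_Ne * 'I_Nr) (s : bool * bool * bool) =>
  pmf R s.1.1 (i == a.1.1) * pmf R s.1.2 (j == a.1.2) *
     pmf R s.2 (X a.1.1 a.1.2 a.2 && (k == a.2)))) /=.
have H (a : 'I_Ne * 'I_Ne * 'I_Nr) :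
  \sum_(s : bool * bool * bool) pmf R s.1.1 (i == a.1.1) * pmf R s.1.2 (j == a.1.2) *
     pmf R s.2 (X a.1.1 a.1.2 a.2 && (k == a.2))
  = ((i == a.1.1) && (j == a.1.2) && X a.1.1 a.1.2 a.2 && (k == a.2))%:R.
  rewrite -(pair_big predT predT (fun (s12 : bool * bool) (s3 : bool) =>
     pmf R s12.1 (i == a.1.1) * pmf R s12.2 (j == a.1.2) *
     pmf R s3 (X a.1.1 a.1.2 a.2 && (k == a.2)))) /=.
  under eq_bigr => s12 _ do rewrite -mulr_sumr sum_pmf.
  rewrite -mulr_suml.
  rewrite -(pair_big predT predT (fun (s1 s2 : bool) =>
     pmf R s1 (i == a.1.1) * pmf R s2 (j == a.1.2))) /=.
  under eq_bigr => s1 _ do rewrite -mulr_sumr sum_pmf.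
  rewrite -mulr_suml !sum_pmf -!natrM !mulnb.
  by rewrite !andbA.
under eq_bigr => a _ do rewrite H.
rewrite (bigD1 (i, j, k)) //= !eqxx /= andbT big1 ?addr0 //.
case=> [[i' j'] k'] /=; rewrite xpair_eqE => /negbTE.
rewrite xpair_eqE.
by rewrite ![_ == i']eq_sym ![_ == j']eq_sym ![_ == k']eq_sym; case: (i' == i); case: (j' == j); case: (k' == k); rewrite ?andbF.
Qed.
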